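(* Let $n\ge4$ and let $H$ be an arbitrary element of the Hilbert space $\mathscr H_n$. Then there exist points $v_1,\dots,v_n$ in a Euclidean space $\mathbb R^d$ with $d\le n-2$ such that the $\mathcal U$-centered Euclidean distance matrix of $v_1,\dots,v_n$, i.e. $\widetilde D$ for $D=(|v_i-v_j|)_{i,j}$, is exactly equal to $H$.
   Context: $\mathcal U$-centering: for a symmetric real $n\times n$ matrix $A=(a_{ij})$ with zero diagonal, $n>2$, the matrix $\widetilde A$ has entries $\widetilde A_{ii}=0$ and, for $i\neq j$, $$\widetilde A_{ij}=a_{ij}-\frac{1}{n-2}\sum_{\ell=1}^n a_{i\ell}-\frac{1}{n-2}\sum_{k=1}^n a_{kj}+\frac{1}{(n-1)(n-2)}\sum_{k,\ell=1}^n a_{k\ell}.$$ $\mathscr H_n$ is the real linear span of all matrices $\widetilde A$ where $A$ ranges over the Euclidean distance matrices $(|x_i-x_j|)_{i,j}$ of $n$-point sets in some $\mathbb R^p$, $p\ge1$ (equivalently, the set of $\widetilde A$ for $A$ in the linear span of such distance matrices), with inner product $(C\cdot D)=\frac{1}{n(n-3)}\sum_{i\ne j}C_{ij}D_{ij}$. *)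

(* Defs.v *)
(* Reals are an arbitrary real closed field R (rcfType),
   which contains the case of the real numbers. *)
From HB Require Import structures.
From mathcomp Require Import all_boot all_order all_algebra.
Set Implicit Arguments. Unset Strict Implicit. Unset Printing Implicit Defensive.
Import Order.TTheory GRing.Theory Num.Theory.
Local Open Scope ring_scope.

Definition edist (R : rcfType) (p : nat) (x y : 'rV[R]_p) : R :=
  Num.sqrt (\sum_(k < p) (x 0 k - y 0 k) ^+ 2).

Definition edm (R : rcfType) (n p : nat) (v : 'I_n -> 'rV[R]_p) : 'M[R]_n :=
  \matrix_(i, j) edist (v i) (v j).

Definition ucenter (R : rcfType) (n : nat) (A : 'M[R]_n) : 'M[R]_n :=
  \matrix_(i, j)
    if i == j then 0
    else A i j - (\sum_(l < n) A i l) / (n - 2)%:R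
               - (\sum_(k < n) A k j) / (n - 2)%:R
               + (\sum_(k < n) \sum_(l < n) A k l) / ((n - 1) * (n - 2))%:R.

(* H belongs to the space H_n: H is a finite real linear combination of
   U-centered distance matrices of n-point sets in R^p, p >= 1
   (the dimension p may vary from term to term). *)
Definition in_Hn (R : rcfType) (n : nat) (H : 'M[R]_n) : Prop :=
  exists (m : nat) (c : 'I_m -> R) (ps : 'I_m -> nat)
         (pts : forall k : 'I_m, 'I_n -> 'rV[R]_(ps k).+1),
    H = \sum_(k < m) c k *: ucenter (edm (pts k)).

(* Main.v *)
Require Import Defs.
From HB Require Import structures.
From mathcomp Require Import all_boot all_order all_algebra.
From mathcomp Require Import ring lra polyrcf.
Set Implicit Arguments. Unset Strict Implicit. Unset Printing Implicit Defensive.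
Import Order.TTheory GRing.Theory Num.Theory.
Local Open Scope ring_scope.

Section Chol.
Variable R : rcfType.

Fixpoint chain (k : nat) : 'M[R]_k -> Prop :=
  match k return 'M[R]_k -> Prop with
  | 0 => fun _ => True
  | k'.+1 => fun G => 0 < \det G /\ chain (drsubmx (G : 'M_(1 + k')))
  end.

Lemma schur_fact k (g : 'M[R]_(k,1)) (P : 'M[R]_k) (gam : 'M[R]_1) :
  P \in unitmx ->
  let x := invmx P *m g in
  block_mx gam g^T g (P *m P^T) =
  block_mx 1%:M x^T 0 P *m block_mx (gam - x^T *m x) 0 0 1%:M *m
  block_mx 1%:M 0 x P^T.
Proof.
move=> Pu x.
have Px : P *m x = g by rewrite /x mulmxA mulmxV // mul1mx.
rewrite !mulmx_block !(mul0mx, mulmx0, mul1mx, mulmx1, addr0, add0r).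

by rewrite subrK -trmx_mul Px.
Qed.

Lemma schur_det k (g : 'M[R]_(k,1)) (P : 'M[R]_k) (gam : 'M[R]_1) :
  P \in unitmx ->
  \det (block_mx gam g^T g (P *m P^T)) =
  (gam - (invmx P *m g)^T *m (invmx P *m g)) 0 0 * \det P ^+ 2.
Proof.
move=> Pu; rewrite schur_fact // !det_mulmx.
rewrite (det_ublock (1%:M : 'M_1)) (det_ublock (_ : 'M_1)) (det_lblock (1%:M : 'M_1)).
rewrite !det1 !det_mx11 det_tr !mxE /= !mul1r mulr1 mulrC expr2 mulrA.
by rewrite mulrC.
Qed.


Lemma unit_sq_gt0 k (P : 'M[R]_k) : P \in unitmx -> 0 < \det P ^+ 2.
Proof. by rewrite unitmxE unitfE => ?; rewrite exprn_even_gt0. Qed.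

Lemma chol k (G : 'M[R]_k) : G^T = G -> chain G ->
  exists2 P : 'M_k, P \in unitmx & G = P *m P^T.
Proof.
elim: k G => [|k IH] G sG cG.
  exists 1%:M; first by rewrite unitmx1.
  by apply/matrixP => [[]].
case: cG => dG cG.
have sG' : (drsubmx (G : 'M_(1 + k)))^T = drsubmx (G : 'M_(1+k)).
  by rewrite trmx_drsub sG.
have [P Pu eP] := IH _ sG' cG.
have eur : ursubmx (G : 'M_(1+k)) = (dlsubmx (G : 'M_(1+k)))^T.
  by rewrite trmx_dlsub sG.
set g := dlsubmx (G : 'M_(1+k)) in eur.
set gam := ulsubmx (G : 'M_(1+k)).
have eG : G = block_mx gam g^T g (P *m P^T) :> 'M_(1+k).
  by rewrite -eur -eP submxK.
set x := invmx P *m g.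
set t := (gam - x^T *m x) 0 0.
have dGe : \det G = t * \det P ^+ 2 by rewrite eG schur_det.
have t_gt0 : 0 < t.
  by rewrite -(pmulr_lgt0 _ (unit_sq_gt0 Pu)) -dGe.
exists (block_mx (Num.sqrt t)%:M x^T 0 P).
  rewrite unitmxE (det_ublock ((Num.sqrt t)%:M : 'M_1)) det_scalar1 unitfE.
  rewrite mulf_neq0 //; first by rewrite gt_eqF // sqrtr_gt0.
  by move: Pu; rewrite unitmxE unitfE.
have Px : P *m x = g by rewrite /x mulmxA mulmxV // mul1mx.
suff E : block_mx gam g^T g (P *m P^T) = 
  (block_mx ((Num.sqrt t)%:M : 'M_1) x^T 0 P *m (block_mx ((Num.sqrt t)%:M : 'M_1) x^T 0 P)^T : 'M_(1+k)).
  by rewrite eG; exact: E.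
rewrite tr_block_mx mulmx_block !(mul0mx, mulmx0, addr0, add0r) trmx0 tr_scalar_mx.
rewrite mulmx0 add0r trmxK -trmx_mul Px -scalar_mxM -expr2 sqr_sqrtr ?ltW //.
congr block_mx.
by rewrite /t -mx11_scalar subrK.
Qed.

Lemma chol_sing k (G : 'M[R]_(1 + k)) : G^T = G -> chain (drsubmx G) ->
  \det G = 0 -> exists Q : 'M[R]_(1 + k, k), G = Q *m Q^T.
Proof.
move=> sG cG dG0.
have sG' : (drsubmx G)^T = drsubmx G by rewrite trmx_drsub sG.
have [P Pu eP] := chol sG' cG.
have eur : ursubmx G = (dlsubmx G)^T by rewrite trmx_dlsub sG.
set g := dlsubmx G in eur.
set gam := ulsubmx G.
have eG : G = block_mx gam g^T g (P *m P^T).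
  by rewrite -eur -eP submxK.
set x := invmx P *m g.
set t := (gam - x^T *m x) 0 0.
have dGe : \det G = t * \det P ^+ 2 by rewrite eG schur_det.
have t0 : t = 0.
  by move: dG0; rewrite dGe => /eqP; rewrite mulf_eq0 (gt_eqF (unit_sq_gt0 Pu)) orbF => /eqP.
exists (col_mx x^T P).
have Px : P *m x = g by rewrite /x mulmxA mulmxV // mul1mx.
rewrite tr_col_mx mul_col_row trmxK -trmx_mul Px eG; congr block_mx.
apply/eqP; rewrite -subr_eq0; apply/eqP.
by rewrite [LHS]mx11_scalar -/t t0; apply/matrixP => i j; rewrite !mxE mul0rn.
Qed.

End Chol.

Section Blk.
Variable T : Type.

Lemma lr k (j : 'I_k) : lift ord0 j = rshift 1 j :> 'I_(1 + k).
Proof. exact: val_inj. Qed.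
Lemma l0 k : (ord0 : 'I_(1 + k)) = lshift k (ord0 : 'I_1).
Proof. exact: val_inj. Qed.

Lemma blk00 k (a : 'M[T]_1) b c (d : 'M_k) :
  (block_mx a b c d : 'M_(1 + k)) ord0 ord0 = a 0 0.
Proof. by rewrite l0 block_mxEul. Qed.
Lemma blk0l k (a : 'M[T]_1) b c (d : 'M_k) j :
  (block_mx a b c d : 'M_(1 + k)) ord0 (lift ord0 j) = b 0 j.
Proof. by rewrite lr l0 block_mxEur. Qed.
Lemma blkl0 k (a : 'M[T]_1) b c (d : 'M_k) i :
  (block_mx a b c d : 'M_(1 + k)) (lift ord0 i) ord0 = c i 0.
Proof. by rewrite lr l0 block_mxEdl. Qed.
Lemma blkll k (a : 'M[T]_1) b c (d : 'M_k) i j :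
  (block_mx a b c d : 'M_(1 + k)) (lift ord0 i) (lift ord0 j) = d i j.
Proof. by rewrite !lr block_mxEdr. Qed.
End Blk.

Section Mk.
Variable R : rcfType.

Lemma sum_pick n i0 (x : 'I_n -> R) : \sum_(l < n) (l == i0)%:R * x l = x i0.
Proof.
rewrite (bigD1 i0) //= eqxx mul1r big1 ?addr0 // => l /negbTE ->.
by rewrite mul0r.
Qed.

Definition Mk k : 'M[R]_k := \matrix_(i, j) if i == j then 1 else 1/2.

Lemma Mk_colsum k (j : 'I_k) : \sum_(l < k) (if l == j then 1 else 1/2 : R) = (k%:R + 1) / 2.
Proof.
have E : forall l : 'I_k, (if l == j then 1 else 1/2 : R) = 1/2 + (l == j)%:R * (1/2).
  by move=> l; case: eqP => _; rewrite ?mul1r ?mul0r ?addr0 //; field.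
rewrite (eq_bigr _ (fun l _ => E l)) big_split /= sum_pick sumr_const card_ord.
by rewrite -mulr_natl; field.
Qed.

Lemma det_special k (gam : R) :
  \det (block_mx gam%:M (const_mx (1/2)) (const_mx (1/2)) (Mk k) : 'M_(1 + k)) =
  (gam - k%:R / (2 * (k%:R + 1))) * \det (Mk k).
Proof.
pose b : R := 1 / (k%:R + 1).
have k1 : k%:R + 1 != 0 :> R by rewrite lt0r_neq0 // ltr_wpDl.
have E : block_mx gam%:M (const_mx (1/2)) (const_mx (1/2)) (Mk k) =
  block_mx (1%:M : 'M_1) (const_mx b) 0 1%:M *m
  block_mx (gam - k%:R / (2 * (k%:R + 1)))%:M 0 (const_mx (1/2)) (Mk k).
  rewrite mulmx_block !(mul0mx, mulmx0, mul1mx, addr0, add0r).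
  congr block_mx.
    apply/matrixP => i j; rewrite !mxE.
    under eq_bigr do rewrite !mxE.
    rewrite sumr_const card_ord !(ord1 i) !(ord1 j) /= mulr1n.
    by rewrite /b -mulr_natr; field.
  apply/matrixP => i j; rewrite !mxE.
  under eq_bigr do rewrite !mxE.
    by rewrite -mulr_sumr Mk_colsum; rewrite /b; field.
rewrite E det_mulmx (det_ublock (1%:M : 'M_1)) (det_lblock (_%:M : 'M_1)).
by rewrite !det1 det_scalar1 !mul1r.
Qed.

Lemma Mk_block k :
  (Mk (1 + k) : 'M_(1 + k)) = block_mx 1%:M (const_mx (1/2)) (const_mx (1/2)) (Mk k).
Proof.
apply/matrixP => i j.
case: (unliftP ord0 i) => [i'|] ->; case: (unliftP ord0 j) => [j'|] ->.
- by rewrite blkll !mxE (inj_eq (@lift_inj _ ord0)).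
- by rewrite blkl0 !mxE eq_sym (negbTE (neq_lift _ _)).
- by rewrite blk0l !mxE (negbTE (neq_lift _ _)).
- by rewrite blk00 !mxE eqxx.
Qed.

Lemma Mk_chain k : 0 < \det (Mk k) /\ chain (Mk k).
Proof.
elim: k => [|k [dk ck]]; first by rewrite det_mx00.
have dK : 0 < \det (Mk k.+1).
  rewrite [Mk k.+1]Mk_block det_special pmulr_lgt0 //.
  rewrite subr_gt0 ltr_pdivrMr ?mul1r; last by rewrite mulr_gt0 // ltr_wpDl.
  by have := ler0n R k; lra.
split => //; split => //.
by rewrite [Mk k.+1 : 'M_(1 + k)]Mk_block block_mxKdr.
Qed.

End Mk.

Section Near.
Variable R : rcfType.

Definition near0 (P : R -> Prop) := exists2 d : R, 0 < d & forall e, `|e| < d -> P e.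

Lemma near0_and (P Q : R -> Prop) : near0 P -> near0 Q -> near0 (fun e => P e /\ Q e).
Proof.
move=> [d1 d1p H1] [d2 d2p H2]; exists (Num.min d1 d2).
  by rewrite lt_min d1p d2p.
by move=> e; rewrite lt_min => /andP[/H1 ? /H2 ?].
Qed.

Lemma near0_imp (P Q : R -> Prop) : (forall e, P e -> Q e) -> near0 P -> near0 Q.
Proof. by move=> PQ [d dp H]; exists d => // e /H /PQ. Qed.

Lemma near0_pos (p : {poly R}) : 0 < p.[0] -> near0 (fun e => 0 < p.[e]).
Proof.
move=> p0; have [d dp H] := poly_cont 0 p p0.
exists d => // e he; have := H e; rewrite subr0 => /(_ he).
by rewrite ltr_distl subrr => /andP[].
Qed.

Lemma near0_neg (p : {poly R}) : p.[0] < 0 -> near0 (fun e => p.[e] < 0).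
Proof.
move=> p0; have := @near0_pos (- p); rewrite hornerN oppr_gt0 => /(_ p0).
by apply: near0_imp => e; rewrite hornerN oppr_gt0.
Qed.

Lemma near0_ord k (P : 'I_k -> R -> Prop) :
  (forall i, near0 (P i)) -> near0 (fun e => forall i, P i e).
Proof.
elim: k P => [|k IH] P HP.
  by exists 1 => // e _ [].
have := near0_and (HP ord0) (IH (fun j => P (lift ord0 j)) (fun j => HP _)).
apply: near0_imp => e [H0 H1] i.
by case: (unliftP ord0 i) => [j ->|->].
Qed.

Lemma near0_chain k (M : 'M[{poly R}]_k) :
  chain (map_mx (horner_eval 0) M) ->
  near0 (fun e => chain (map_mx (horner_eval e) M)).
Proof.
elim: k M => [|k IH] M /=.
  by move=> _; exists 1.
rewrite det_map_mx => -[d0 c0].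
have H1 := near0_pos (d0 : 0 < (\det M).[0]).
have H2 := IH (drsubmx (M : 'M_(1 + k))) ltac:(by rewrite map_drsubmx).
apply: near0_imp (near0_and H1 H2) => e [h1 h2]; split.
  by rewrite det_map_mx.
by rewrite -map_drsubmx.
Qed.

End Near.

Section UC.
Variable R : rcfType.

Lemma ucenter_lin n (a : R) (A B : 'M[R]_n) :
  ucenter (a *: A + B) = a *: ucenter A + ucenter B.
Proof.
apply/matrixP => i j; rewrite !mxE.
case: eqP => _; first by rewrite mulr0 addr0.
have E : forall k l, (a *: A + B) k l = a * A k l + B k l by move=> k l; rewrite !mxE.
have S1 : forall k, \sum_(l < n) (a *: A + B) k l = a * \sum_(l < n) A k l + \sum_(l < n) B k l.
  by move=> k; rewrite mulr_sumr -big_split; apply: eq_bigr => l _; rewrite E.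
have S2 : forall l, \sum_(k < n) (a *: A + B) k l = a * \sum_(k < n) A k l + \sum_(k < n) B k l.
  by move=> l; rewrite mulr_sumr -big_split; apply: eq_bigr => k _; rewrite E.
rewrite S1 S2 (eq_bigr _ (fun k _ => S1 k)) big_split /= -mulr_sumr.
ring.
Qed.



Lemma ucenter0 n : ucenter (0 : 'M[R]_n) = 0.
Proof.
have h := ucenter_lin 1 0 (0 : 'M[R]_n); rewrite !scale1r !addr0 in h.
have := congr1 (fun M => M - ucenter 0) h; rewrite /= subrr addrK => H.
exact: esym H.
Qed.

Lemma ucenter_sum n m (c : 'I_m -> R) (F : 'I_m -> 'M[R]_n) :
  ucenter (\sum_(k < m) c k *: F k) = \sum_(k < m) c k *: ucenter (F k).
Proof.
elim/big_rec2: _ => [|k y1 y2 _ <-]; first exact: ucenter0.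
by rewrite ucenter_lin.
Qed.

Lemma ucenterK n (hn : (2 < n)%N) (a : 'I_n -> R) :
  ucenter (\matrix_(i, j) if i == j then 0 else a i + a j) = 0.
Proof.
set K := \matrix_(i, j) _.
have Kc : forall i0 l, K i0 l = a i0 + a l - (l == i0)%:R * (a i0 + a l).
  by move=> i0 l; rewrite mxE eq_sym; case: eqP => _; rewrite ?mul1r ?mul0r ?subrr ?subr0.
have Ks : forall i0 l, K i0 l = K l i0 by move=> i0 l; rewrite !mxE eq_sym addrC.
have pick : forall i0 (x : 'I_n -> R), \sum_(l < n) (l == i0)%:R * x l = x i0.
  move=> i0 x; rewrite (bigD1 i0) //= eqxx mul1r big1 ?addr0 // => l /negbTE ->.
  by rewrite mul0r.
set S := \sum_(l < n) a l.
have rs : forall i0, \sum_(l < n) K i0 l = (n - 2)%:R * a i0 + S.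
  move=> i0; under eq_bigr do rewrite Kc.
  rewrite sumrB pick big_split /= sumr_const card_ord -/S.
  have -> : (n - 2)%:R = n%:R - 2 :> R by rewrite natrB // ltnW.
  by rewrite mulrBl mulr_natl; ring.
have cs : forall j0, \sum_(k < n) K k j0 = (n - 2)%:R * a j0 + S.
  by move=> j0; rewrite -rs; apply: eq_bigr => k _; rewrite Ks.
have ts : \sum_(k < n) \sum_(l < n) K k l = (n - 2)%:R * S + n%:R * S.
  rewrite (eq_bigr _ (fun k _ => rs k)) big_split /= -mulr_sumr sumr_const card_ord.
  by rewrite (mulr_natl S n).
apply/matrixP => i j; rewrite !mxE rs cs ts.
case: eqP => // ij.
have n2 : (n - 2)%:R != 0 :> R by rewrite pnatr_eq0 -lt0n subn_gt0.
have n1 : (n - 1)%:R != 0 :> R by rewrite pnatr_eq0 -lt0n subn_gt0 ltnW.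
have e1 : (n - 1)%:R = n%:R - 1 :> R.
  by rewrite natrB ?mulr1n // ltnW // ltnW.
have e0 : (n - 2)%:R = n%:R - 2 :> R.
  by rewrite natrB // ltnW.
rewrite natrM e1 e0; rewrite e1 in n1; rewrite e0 in n2.
by field; rewrite n2 n1.
Qed.


End UC.

Section Gram.
Variable R : rcfType.
Variable m : nat.
Variable A : 'M[R]_(m.+2).

Definition i1 : 'I_(m.+2) := lift ord0 ord0.

Definition aG (T : comNzRingType) (f : R -> T) (s : T) (i : 'I_(m.+2)) : T :=
  f (1/2) + (if i == i1 then s else 0).
Definition D2G (T : comNzRingType) (f : R -> T) (e s : T) (i j : 'I_(m.+2)) : T :=
  if i == j then 0 else (e * f (A i j) + aG f s i + aG f s j) ^+ 2.
Definition GramG (T : comNzRingType) (f : R -> T) (e s : T) : 'M[T]_(m.+1) :=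
  \matrix_(k, l) (f (1/2) * (D2G f e s ord0 (lift ord0 k) + D2G f e s ord0 (lift ord0 l)
                   - D2G f e s (lift ord0 k) (lift ord0 l))).

Lemma map_GramG x (E S : {poly R}) :
  map_mx (horner_eval x) (GramG polyC E S) = GramG id E.[x] S.[x].
Proof.
apply/matrixP => k l; rewrite !mxE horner_evalE /D2G /aG.
by do ![case: ifP => _]; rewrite !hornerE.
Qed.

Lemma aG0 T f s : @aG T f s ord0 = f (1/2).
Proof. by rewrite /aG /i1 (negbTE (neq_lift _ _)) addr0. Qed.
Lemma aG1 T f s : @aG T f s i1 = f (1/2) + s.
Proof. by rewrite /aG eqxx. Qed.
Lemma aG2 T f s k : @aG T f s (lift ord0 (lift ord0 k)) = f (1/2).
Proof.
by rewrite /aG /i1 (inj_eq (@lift_inj _ ord0)) eq_sym (negbTE (neq_lift _ _)) addr0.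
Qed.

Lemma drsub_indep e s :
  drsubmx (GramG id e s : 'M_(1 + m)) = drsubmx (GramG id e 0 : 'M_(1 + m)).
Proof.
apply/matrixP => k l; rewrite !mxE -!lr /D2G !aG0 !aG2.
by [].
Qed.

Lemma Gram_at0 s :
  (GramG id 0 s : 'M_(1 + m)) =
  block_mx ((1 + s) ^+ 2)%:M (const_mx (1/2)) (const_mx (1/2)) (Mk R m).
Proof.
have d1 : (i1 == ord0) = false by rewrite eq_sym (negbTE (neq_lift _ _)).
have d2 : forall k, (lift ord0 (lift ord0 k) == ord0 :> 'I_(m.+2)) = false.
  by move=> k; rewrite eq_sym (negbTE (neq_lift _ _)).
have d3 : forall k, (lift ord0 (lift ord0 k) == i1) = false.
  by move=> k; rewrite /i1 (inj_eq (@lift_inj _ ord0)) eq_sym (negbTE (neq_lift _ _)).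
apply/matrixP => i j.
case: (unliftP ord0 i) => [i'|] ->; case: (unliftP ord0 j) => [j'|] ->.
- rewrite blkll !mxE /D2G !(negbTE (neq_lift _ _)) !(inj_eq (@lift_inj _ ord0)) !aG0 !aG2 !mul0r !add0r.
  by case: eqP => _; field.
- rewrite blkl0 !mxE /D2G !(negbTE (neq_lift _ _)) (inj_eq (@lift_inj _ ord0)) eq_sym (negbTE (neq_lift _ _)).
  by rewrite (_ : lift ord0 ord0 = i1) // !aG0 !aG1 !aG2 !mul0r !add0r; field.
- rewrite blk0l !mxE /D2G !(negbTE (neq_lift _ _)) (inj_eq (@lift_inj _ ord0)) (negbTE (neq_lift _ _)).
  by rewrite (_ : lift ord0 ord0 = i1) // !aG0 !aG1 !aG2 !mul0r !add0r; field.
- rewrite blk00 !mxE /D2G !(negbTE (neq_lift _ _)) eqxx.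
  by rewrite (_ : lift ord0 ord0 = i1) // !aG0 !aG1 !mul0r !add0r eqxx mulr1n; field.
Qed.

Lemma GramG_sym (sA : A^T = A) e s : (GramG id e s)^T = GramG id e s.
Proof.
have Asym : forall i j, A j i = A i j by move=> i j; rewrite -[A in RHS]sA mxE.
have Dsym : forall i j, D2G id e s j i = D2G id e s i j.
  by move=> i j; rewrite /D2G eq_sym Asym; case: eqP => // _; congr (_ ^+ 2); ring.
apply/matrixP => k l; rewrite !mxE (Dsym (lift ord0 l) (lift ord0 k)).
by rewrite (addrC (D2G id e s ord0 (lift ord0 l))).
Qed.

Lemma det_Gram0 s : \det (GramG id 0 s) = ((1 + s) ^+ 2 - m%:R / (2 * (m%:R + 1))) * \det (Mk R m).
Proof. by rewrite -det_special -Gram_at0. Qed.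

Lemma D2G_sym (sA : A^T = A) e s i j : D2G id e s j i = D2G id e s i j.
Proof.
have Asym : forall i j, A j i = A i j by move=> i' j'; rewrite -[A in RHS]sA mxE.
by rewrite /D2G eq_sym Asym; case: eqP => // _; congr (_ ^+ 2); ring.
Qed.

Lemma detE x (E S : {poly R}) :
  (\det (GramG polyC E S)).[x] = \det (GramG id E.[x] S.[x]).
Proof. by rewrite -horner_evalE -det_map_mx map_GramG. Qed.

End Gram.

Section Ed.
Variable R : rcfType.

Lemma edist_sym p (x y : 'rV[R]_p) : edist x y = edist y x.
Proof.
rewrite /edist; congr Num.sqrt; apply: eq_bigr => k _.
by rewrite -opprB sqrrN.
Qed.

Lemma edist_self p (x : 'rV[R]_p) : edist x x = 0.
Proof.
by rewrite /edist big1 ?sqrtr0 // => k _; rewrite subrr expr0n.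
Qed.

Lemma edist_scale p (c : R) (x y : 'rV[R]_p) : edist (c *: x) (c *: y) = `|c| * edist x y.
Proof.
rewrite /edist.
rewrite (eq_bigr (fun k => c ^+ 2 * (x 0 k - y 0 k) ^+ 2)); last first.
  by move=> k _; rewrite !mxE -mulrBr exprMn.
by rewrite -mulr_sumr sqrtrM ?sqr_ge0 // sqrtr_sqr.
Qed.

Lemma ucenterZ n (c : R) (M : 'M[R]_n) : ucenter (c *: M) = c *: ucenter M.
Proof. by have := ucenter_lin c M 0; rewrite !addr0 ucenter0 addr0. Qed.

Lemma sqd p k (Q : 'M[R]_(k, p)) (a b : 'I_k) :
  \sum_(c < p) (row a Q 0 c - row b Q 0 c) ^+ 2 =
  (Q *m Q^T) a a + (Q *m Q^T) b b - 2 * (Q *m Q^T) a b.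
Proof.
rewrite !mxE.
rewrite (eq_bigr (fun c => Q a c * Q a c + Q b c * Q b c - 2 * (Q a c * Q b c))); last first.
  by move=> c _; rewrite !mxE; ring.
rewrite sumrB big_split /= -mulr_sumr.
have E : forall x y, \sum_(j < p) Q x j * Q^T j y = \sum_(j < p) Q x j * Q y j.
  by move=> x y; apply: eq_bigr => j _; rewrite mxE.
by rewrite !E.
Qed.

Lemma sqd0 p k (Q : 'M[R]_(k, p)) (a : 'I_k) :
  \sum_(c < p) (row a Q 0 c - (0 : 'rV[R]_p) 0 c) ^+ 2 = (Q *m Q^T) a a.
Proof.
rewrite !mxE; apply: eq_bigr => c _; rewrite !mxE subr0; ring.
Qed.

End Ed.

Section Core.
Variable R : rcfType.

Lemma core m (hm : (2 <= m)%N) (A : 'M[R]_(m.+2)) (sA : A^T = A)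
  (hA : forall i, A i i = 0) :
  exists v : 'I_(m.+2) -> 'rV[R]_m, ucenter (edm v) = ucenter A.
Proof.
have [dM _] := Mk_chain R m.
have m2 : 2 <= m%:R :> R by rewrite (ler_nat R 2 m).
have mp : 0 < 2 * (m%:R + 1) :> R.
  by rewrite mulr_gt0 // ltr_wpDl // (le_trans _ m2).
have q1 : m%:R / (2 * (m%:R + 1)) < 1 :> R.
  by rewrite ltr_pdivrMr // mul1r; lra.
have q2 : 1 / 4 < m%:R / (2 * (m%:R + 1)) :> R.
  by rewrite ltr_pdivlMr // mulrC mulrA ltr_pdivrMr //; lra.
have N1 : near0 (fun e => chain (drsubmx (GramG A id e 0 : 'M_(1 + m)))).
  have := @near0_chain R m (drsubmx (GramG A polyC 'X 0 : 'M_(1 + m))).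
  rewrite map_drsubmx map_GramG hornerX horner0 Gram_at0 block_mxKdr.
  move=> /(_ (proj2 (Mk_chain R m))).
  by apply: near0_imp => e; rewrite map_drsubmx map_GramG hornerX horner0.
have N2 : near0 (fun e => 0 < \det (GramG A id e 0)).
  have := @near0_pos R (\det (GramG A polyC 'X 0)).
  rewrite detE hornerX horner0 det_Gram0 addr0 expr1n.
  move=> /(_ (mulr_gt0 _ dM)); rewrite subr_gt0 => /(_ q1).
  by apply: near0_imp => e; rewrite detE hornerX horner0.
have N3 : near0 (fun e => \det (GramG A id e (-(1/2))) < 0).
  have := @near0_neg R (\det (GramG A polyC 'X (-(1/2))%:P)).
  rewrite detE hornerX hornerC det_Gram0 pmulr_llt0 //.
  have -> : (1 + - (1/2)) ^+ 2 = 1/4 :> R by field.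
  rewrite subr_lt0 => /(_ q2).
  by apply: near0_imp => e; rewrite detE hornerX hornerC.
have N4 : near0 (fun e => forall i j, 0 < 1/2 + e * A i j).
  apply: near0_ord => i; apply: near0_ord => j.
  have := @near0_pos R ((1/2)%:P + 'X * (A i j)%:P).
  rewrite !hornerE => /(_ _).
  have h2 : 0 < 2^-1 :> R by rewrite invr_gt0.
  move=> /(_ h2); apply: near0_imp => e.
  by rewrite !hornerE.
have [d dp Hd] := near0_and N1 (near0_and N2 (near0_and N3 N4)).
pose eps := d / 2.
have ep : 0 < eps by rewrite divr_gt0.
have [C1 [C2 [C3 C4]]] : _ := Hd eps ltac:(by rewrite gtr0_norm // ltr_pdivrMr //; lra).
pose ps := \det (GramG A polyC eps%:P 'X).
have psE : forall x, ps.[x] = \det (GramG A id eps x).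
  by move=> x; rewrite /ps detE hornerC hornerX.
have [s sI rs] := @polyrcf.poly_ivt R ps (-(1/2)) 0 ltac:(lra) ltac:(rewrite !psE; nra).
move: sI; rewrite in_itv /= => /andP[s1 s2].
have dG : \det (GramG A id eps s) = 0 by rewrite -psE; apply/rootP.
have cG : chain (drsubmx (GramG A id eps s : 'M_(1 + m))) by rewrite drsub_indep.
have [Q eQ] := chol_sing (GramG_sym sA eps s) cG dG.
pose v (i : 'I_(m.+2)) : 'rV[R]_m := if unlift ord0 i is Some k then row k Q else 0.
pose D := D2G A id eps s.
have Dii : forall i, D i i = 0 by move=> i; rewrite /D /D2G eqxx.
have Gkl : forall k l, (Q *m Q^T) k l = 1/2 * (D ord0 (lift ord0 k) + D ord0 (lift ord0 l) - D (lift ord0 k) (lift ord0 l)).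
  by move=> k l; rewrite -eQ mxE.
have ev : forall i j, edist (v i) (v j) = Num.sqrt (D i j).
  move=> i j; rewrite /edist /v.
  case: (unliftP ord0 i) => [k|] ->; case: (unliftP ord0 j) => [l|] ->;
    rewrite ?liftK ?unlift_none.
  - by rewrite sqd !Gkl !Dii; congr Num.sqrt; field.
  - by rewrite sqd0 Gkl Dii /D D2G_sym //; congr Num.sqrt; field.
  - rewrite (eq_bigr (fun c => (row l Q 0 c - (0 : 'rV[R]_m) 0 c) ^+ 2)).
      by rewrite sqd0 Gkl Dii; congr Num.sqrt; field.
    by move=> c _; rewrite !mxE -opprB sqrrN.
  - by rewrite Dii big1 // => c _; rewrite !mxE subrr expr0n.
pose K : 'M[R]_(m.+2) := \matrix_(i, j) if i == j then 0 else aG id s i + aG id s j.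
have eV : edm v = eps *: A + K.
  apply/matrixP => i j; rewrite !mxE ev /D /D2G.
  case: eqP => [->|ij]; first by rewrite sqrtr0 hA mulr0 add0r.
  rewrite sqrtr_sqr ger0_norm ?addrA //.
  have := C4 i j; rewrite /aG.
  set t := eps * A i j.
  case: eqP => [ei|_]; case: eqP => [ej|_] h; try lra.
  by exfalso; apply: ij; rewrite ei ej.
pose w i := eps^-1 *: v i.
have eW : edm w = eps^-1 *: edm v.
  apply/matrixP => i j; rewrite !mxE edist_scale ger0_norm //.
  by rewrite invr_ge0 ltW.
exists w; rewrite eW ucenterZ eV ucenter_lin.
have uK : ucenter K = 0.
  have hh : (2 < m.+2)%N by rewrite ltnS ltnW.
  exact: (@ucenterK R m.+2 hh (fun i => aG id s i)).
by rewrite uK addr0 scalerA mulVf ?scale1r // gt_eqF.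
Qed.

End Core.

Theorem theorem2 (R : rcfType) (n : nat) (hn : (4 <= n)%N)
  (H : 'M[R]_n) (hH : in_Hn H) :
  exists (d : nat), (d <= n - 2)%N /\
    exists v : 'I_n -> 'rV[R]_d, ucenter (edm v) = H.
Proof.
case: hH => M [c [ps [pts ->]]].
rewrite -ucenter_sum.
clear H; case: n hn pts => [|[|m]] // hn pts.
exists m; split; first by rewrite subSS subSS subn0.
apply: core => //.
  apply/matrixP => i j; rewrite !mxE !summxE; apply: eq_bigr => k _.
  by rewrite !mxE edist_sym.
by move=> i; rewrite summxE big1 // => k _; rewrite !mxE edist_self mulr0.
Qed.
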